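(* Let $A$ be an arena and $\sigma$ a view function on $A$. Then its view closure $\overline{\sigma}$ is a strategy on $A$ (a non-empty set of even-length plays, closed under even-length prefixes, deterministic and uniform).
   Context: First-order variables are split into three disjoint countable sets: $\mathcal A$-variables, $\mathcal O$-variables (with a fixed enumeration $(o_i)_{i\in\mathbb N}$) and $\mathcal P$-variables. $\mathcal{AP}$-terms (resp. $\mathcal{OP}$-terms) are first-order terms built from $\mathcal A$- and $\mathcal P$-variables (resp. $\mathcal O$- and $\mathcal P$-variables). Arena: a finite forest whose nodes (moves) carry a first-order label (a list of $\mathcal A$-variables, all such variables in the arena being distinct) and an atomic label (a list of atomic formulas $X\,t_1\dots t_k$ whose $t_i$ are $\mathcal{AP}$-terms whose $\mathcal A$-variables occur in the first-order label of the node or of an ancestor). Polarity is depth parity: even = Opponent (O), odd = Player (P); roots are initial. Justified sequence: finite sequence of move occurrences; each non-initial occurrence has a $\lambda$-pointer to an earlier occurrence of its father; each element of the atomic label of an occurrence has at most one $\mu$-pointer to an element of the atomic label of an earlier occurrence of opposite polarity. Instantiations: each O-move occurrence carries an $\mathcal O$-instantiation (list of $\mathcal O$-variables of the length of its first-order label), each P-move occurrence a $\mathcal P$-instantiation (list of $\mathcal{OP}$-terms of that length); all $\mathcal O$-variables in $\mathcal O$-instantiations are distinct. For an occurrence $m$ with instantiation $[t_1..t_k]$ and first-order label $[x_1..x_k]$, $\theta_m=\{x_i\mapsto t_i\}$ if $m$ is initial, else $\theta_m=\theta_n\cup\{x_i\mapsto t_i\}$ with $n$ its $\lambda$-justifier.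 Play: an instantiated justified sequence with alternating polarities, no $\mu$-pointers from O-moves, exactly one $\mu$-pointer from each element of the atomic label of each P-move, every $\mu$-pointer from $X\,t_1..t_k$ at $m$ to $Y\,u_1..u_p$ at $n$ satisfying $X=Y$, $k=p$, $t_i\theta_m=u_i\theta_n$, and every $\mathcal O$-variable occurring in a $\mathcal P$-instantiation occurring in an earlier $\mathcal O$-instantiation. An $\mathcal O$-renaming is an injection $\varsigma$ of $\mathcal O$-variables into themselves; $s\varsigma$ replaces each $o$ by $\varsigma(o)$ in all instantiations. Strategy: non-empty set of even-length plays closed under even-length prefixes, deterministic ($sm,sn\in\sigma\Rightarrow sm=sn$, including pointers and instantiations) and uniform ($s\in\sigma\Rightarrow s\varsigma\in\sigma$ for every $\mathcal O$-renaming). View: a play in which each O-move occurrence other than the first is $\lambda$-justified by the immediately preceding move, and the concatenation (in order) of its $\mathcal O$-instantiations is a prefix of $(o_i)$. Pre-view: $\lceil\varepsilon\rceil=\varepsilon$; $\lceil sm\rceil=\lceil s\rceil m$ for P-moves $m$; $\lceil sm\rceil=m$ for initial $m$; $\lceil sm\,t\,n\rceil=\lceil sm\rceil n$ for an O-move $n$ justified by $m$. The view $\ulcorner s\urcorner$ is $\lceil s\rceil\varsigma$ where $\varsigma$ is an $\mathcal O$-renaming sending the $i$-th $\mathcal O$-variable played in $\lceil s\rceil$ to $o_i$. View function: non-empty set of even-length views closed under even-length prefixes and deterministic. View closure $\overline\sigma$: least set with $\varepsilon\in\overline\sigma$ and, if $s\in\overline\sigma$, $smn$ is a play and $\ulcorner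 smn\urcorner\in\sigma$, then $smn\in\overline\sigma$. *)

(* Defs.v *)
From Stdlib Require Import List Arith Bool.
Import ListNotations.

(** Variables: A-variables, O-variables (o_i is [VO i]), P-variables. *)
Inductive var := VA (x : nat) | VO (x : nat) | VP (x : nat).

Inductive term := Var (v : var) | App (f : nat) (args : list term).

Record atom := mkAtom { a_pred : nat; a_args : list term }.

Fixpoint fvars (t : term) : list var :=
  match t with
  | Var v => [v]
  | App _ l => flat_map fvars l
  end.

Definition AP_term (t : term) : Prop :=
  forall v, In v (fvars t) -> match v with VO _ => False | _ => True end.
Definition OP_term (t : term) : Prop :=
  forall v, In v (fvars t) -> match v with VA _ => False | _ => True end.

Fixpoint lookup (x : nat) (th : list (nat * term)) : option term :=
  match th with
  | [] => None
  | (y, u) :: r => if Nat.eqb x y then Some u else lookup x r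
  end.

Fixpoint subst (th : list (nat * term)) (t : term) : term :=
  match t with
  | Var (VA x) => match lookup x th with Some u => u | None => t end
  | Var _ => t
  | App f l => App f (map (subst th) l)
  end.

Fixpoint ren_term (r : nat -> nat) (t : term) : term :=
  match t with
  | Var (VO k) => Var (VO (r k))
  | Var v => Var v
  | App f l => App f (map (ren_term r) l)
  end.

(** Moves are [0 .. n_moves-1]; [parent m = None] for roots.  The forest
    structure is enforced in [wf_arena] by requiring parents to have smaller
    index (every finite forest can be so numbered). *)
Record arena := mkArena {
  n_moves : nat;
  parent : nat -> option nat;
  fo_label : nat -> list nat;     (* list of A-variables (indices) *)
  at_label : nat -> list atom }.

Inductive anc_or_self (A : arena) : nat -> nat -> Prop :=
| anc_refl m : anc_or_self A m m
| anc_up a m p : parent A m = Some p -> anc_or_self A a p -> anc_or_self A a m.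

Definition wf_arena (A : arena) : Prop :=
  (forall m p, m < n_moves A -> parent A m = Some p -> p < m) /\
  NoDup (flat_map (fo_label A) (seq 0 (n_moves A))) /\
  (forall m a t, m < n_moves A -> In a (at_label A m) -> In t (a_args a) ->
     AP_term t /\
     forall x, In (VA x) (fvars t) ->
       exists n, anc_or_self A n m /\ In x (fo_label A n)).

Fixpoint depth_f (A : arena) (fuel m : nat) : nat :=
  match fuel with
  | 0 => 0
  | S f => match parent A m with None => 0 | Some p => S (depth_f A f p) end
  end.
Definition depth (A : arena) (m : nat) : nat := depth_f A (S m) m.

Definition is_O (A : arena) (m : nat) : bool := Nat.even (depth A m).

(** Pointers are absolute positions (0-based) in the
    sequence: [o_just] is the lambda-pointer, [o_mu] has one entry per element
    of the atomic label (None = no mu-pointer; Some (j,l) = pointer to the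
    l-th atom of the occurrence at position j), [o_inst] the instantiation. *)
Record occ := mkOcc {
  o_move : nat;
  o_just : option nat;
  o_mu : list (option (nat * nat));
  o_inst : list term }.

Definition dummy_occ : occ := mkOcc 0 None [] [].

Definition ovars_inst (l : list term) : list nat :=
  flat_map (fun t => match t with Var (VO k) => [k] | _ => [] end) l.

Definition O_ovars (A : arena) (s : list occ) : list nat :=
  flat_map (fun o => if is_O A (o_move o) then ovars_inst (o_inst o) else []) s.

Definition jseq (A : arena) (s : list occ) : Prop :=
  (forall i o, nth_error s i = Some o ->
    o_move o < n_moves A /\
    match parent A (o_move o) with
    | None => o_just o = None
    | Some p => exists j o', o_just o = Some j /\ j < i /\
                  nth_error s j = Some o' /\ o_move o' = p
    end /\
    length (o_mu o) = length (at_label A (o_move o)) /\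
    (forall k j l, nth_error (o_mu o) k = Some (Some (j, l)) ->
       j < i /\ exists o', nth_error s j = Some o' /\
         is_O A (o_move o') <> is_O A (o_move o) /\
         l < length (at_label A (o_move o'))) /\
    length (o_inst o) = length (fo_label A (o_move o)) /\
    (if is_O A (o_move o)
     then forall t, In t (o_inst o) -> exists k, t = Var (VO k)
     else forall t, In t (o_inst o) -> OP_term t)) /\
  NoDup (O_ovars A s).

Fixpoint theta_f (A : arena) (s : list occ) (fuel i : nat) : list (nat * term) :=
  match fuel with
  | 0 => []
  | S f =>
    match nth_error s i with
    | None => []
    | Some o =>
      combine (fo_label A (o_move o)) (o_inst o) ++
      match o_just o with None => [] | Some j => theta_f A s f j end
    end
  end.
Definition theta (A : arena) (s : list occ) (i : nat) := theta_f A s (S i) i.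

Definition play (A : arena) (s : list occ) : Prop :=
  jseq A s /\
  (forall i o o', nth_error s i = Some o -> nth_error s (S i) = Some o' ->
     is_O A (o_move o) <> is_O A (o_move o')) /\
  (forall i o, nth_error s i = Some o -> is_O A (o_move o) = true ->
     forall x, In x (o_mu o) -> x = None) /\
  (forall i o, nth_error s i = Some o -> is_O A (o_move o) = false ->
     forall x, In x (o_mu o) -> x <> None) /\
  (forall i o k j l o' a b, nth_error s i = Some o ->
     nth_error (o_mu o) k = Some (Some (j, l)) -> nth_error s j = Some o' ->
     nth_error (at_label A (o_move o)) k = Some a ->
     nth_error (at_label A (o_move o')) l = Some b ->
     a_pred a = a_pred b /\
     map (subst (theta A s i)) (a_args a) = map (subst (theta A s j)) (a_args b)) /\
  (forall i o t x, nth_error s i = Some o -> is_O A (o_move o) = false ->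
     In t (o_inst o) -> In (VO x) (fvars t) ->
     exists j o', j < i /\ nth_error s j = Some o' /\
       is_O A (o_move o') = true /\ In x (ovars_inst (o_inst o'))).

Definition O_renaming (r : nat -> nat) : Prop := forall x y, r x = r y -> x = y.

Definition ren_occ (r : nat -> nat) (o : occ) : occ :=
  mkOcc (o_move o) (o_just o) (o_mu o) (map (ren_term r) (o_inst o)).
Definition ren_seq (r : nat -> nat) (s : list occ) : list occ := map (ren_occ r) s.

Definition strategy (A : arena) (S : list occ -> Prop) : Prop :=
  (exists s, S s) /\
  (forall s, S s -> play A s /\ Nat.even (length s) = true) /\
  (forall s t, S (s ++ t) -> Nat.even (length s) = true -> S s) /\
  (forall s m n, S (s ++ [m]) -> S (s ++ [n]) -> m = n) /\
  (forall s r, O_renaming r -> S s -> S (ren_seq r s)).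

Definition is_view (A : arena) (s : list occ) : Prop :=
  play A s /\
  (forall i o, nth_error s i = Some o -> is_O A (o_move o) = true -> i <> 0 ->
     o_just o = Some (pred i)) /\
  O_ovars A s = seq 0 (length (O_ovars A s)).

Definition view_function (A : arena) (S : list occ -> Prop) : Prop :=
  (exists s, S s) /\
  (forall s, S s -> is_view A s /\ Nat.even (length s) = true) /\
  (forall s t, S (s ++ t) -> Nat.even (length s) = true -> S s) /\
  (forall s m n, S (s ++ [m]) -> S (s ++ [n]) -> m = n).

(** Pre-view: positions (in [s]) of the occurrences kept in the pre-view of
    the prefix of length [k] of [s]. *)
Fixpoint pv_idx (A : arena) (s : list occ) (fuel k : nat) : list nat :=
  match fuel with
  | 0 => []
  | S f =>
    match k with
    | 0 => []
    | S k' =>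
      match nth_error s k' with
      | None => []
      | Some o =>
        if negb (is_O A (o_move o)) then pv_idx A s f k' ++ [k']
        else match o_just o with
             | None => [k']
             | Some j => pv_idx A s f (S j) ++ [k']
             end
      end
    end
  end.

Fixpoint index_of (x : nat) (l : list nat) : option nat :=
  match l with
  | [] => None
  | y :: r => if Nat.eqb x y then Some 0 else option_map S (index_of x r)
  end.

(** Re-indexing of a pointer into the subsequence [idx]; a pointer to an
    occurrence not kept is sent to the occurrence itself ([self]), which is
    not an "earlier" occurrence, so the result is then not a justified
    sequence. *)
Definition remap (idx : list nat) (self j : nat) : nat :=
  match index_of j idx with Some i => i | None => self end.

Definition adj_occ (idx : list nat) (i : nat) (o : occ) : occ :=
  mkOcc (o_move o) (option_map (remap idx i) (o_just o))
        (map (option_map (fun p => (remap idx i (fst p), snd p))) (o_mu o))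
        (o_inst o).

Definition restrict (s : list occ) (idx : list nat) : list occ :=
  map (fun ip => adj_occ idx (fst ip) (nth (snd ip) s dummy_occ))
      (combine (seq 0 (length idx)) idx).

Definition preview (A : arena) (s : list occ) : list occ :=
  restrict s (pv_idx A s (length s) (length s)).

(** Canonical O-renaming sending the i-th element of [L] to o_i
    (injective when [L] has no duplicates). *)
Definition canon (L : list nat) (x : nat) : nat :=
  match index_of x L with Some i => i | None => length L + x end.

Definition view (A : arena) (s : list occ) : list occ :=
  let v := preview A s in ren_seq (canon (O_ovars A v)) v.

Inductive vclosure (A : arena) (S : list occ -> Prop) : list occ -> Prop :=
| vcl_nil : vclosure A S []
| vcl_step s m n :
    vclosure A S s -> play A (s ++ [m; n]) -> S (view A (s ++ [m; n])) ->
    vclosure A S (s ++ [m; n]).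

(* Main.v *)
Require Import Defs.
From Stdlib Require Import List Arith Bool Lia.
From Stdlib Require FinFun.
Import ListNotations.

Fixpoint term_ind2 (P : term -> Prop) (Hv : forall v, P (Var v))
  (Ha : forall f l, Forall P l -> P (App f l)) (t : term) : P t :=
  match t with
  | Var v => Hv v
  | App f l => Ha f l ((fix go (l : list term) : Forall P l :=
       match l with [] => Forall_nil _ | x :: r => Forall_cons _ (term_ind2 P Hv Ha x) (go r) end) l)
  end.

Definition ren_var (r : nat -> nat) (v : var) : var :=
  match v with VO k => VO (r k) | _ => v end.

Lemma fvars_ren r t : fvars (ren_term r t) = map (ren_var r) (fvars t).
Proof.
  induction t using term_ind2.
  - destruct v; reflexivity.
  - simpl. induction H; simpl; auto.
    rewrite map_app, H, IHForall. reflexivity.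
Qed.

Lemma ren_term_inj r : (forall x y, r x = r y -> x = y) ->
  forall t1 t2, ren_term r t1 = ren_term r t2 -> t1 = t2.
Proof.
  intros Hr t1. induction t1 using term_ind2; intros t2 E.
  - destruct v, t2 as [w|]; try destruct w; simpl in E; inversion E; subst; auto.
    rewrite (Hr _ _ H0); auto.
  - destruct t2 as [w|g l2]; [destruct w; simpl in E; discriminate|].
    simpl in E. inversion E; subst. f_equal. clear E.
    revert l2 H2. induction H; intros [|b l2] E2; simpl in E2; try discriminate; auto.
    inversion E2. f_equal; auto.
Qed.

Lemma map_inj {X Y} (f : X -> Y) : (forall a b, f a = f b -> a = b) ->
  forall l1 l2, map f l1 = map f l2 -> l1 = l2.
Proof.
  intros Hf l1; induction l1; intros [|b l2] E; simpl in E; try discriminate; auto.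
  inversion E. f_equal; auto.
Qed.

Lemma ren_term_comp f g t : ren_term f (ren_term g t) = ren_term (fun x => f (g x)) t.
Proof.
  induction t using term_ind2.
  - destruct v; reflexivity.
  - simpl. f_equal. rewrite map_map. induction H; simpl; auto. f_equal; auto.
Qed.

Lemma ren_term_ext f g t : (forall x, In (VO x) (fvars t) -> f x = g x) ->
  ren_term f t = ren_term g t.
Proof.
  induction t using term_ind2; intros E.
  - destruct v; simpl in *; auto. rewrite E; auto.
  - simpl. f_equal. simpl in E. induction H; simpl; auto.
    simpl in E. f_equal.
    + apply H; intros; apply E; apply in_or_app; auto.
    + apply IHForall; intros; apply E; apply in_or_app; auto.
Qed.

Lemma ovars_inst_ren r l : ovars_inst (map (ren_term r) l) = map r (ovars_inst l).
Proof.
  induction l as [|t l IH]; simpl; auto.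
  unfold ovars_inst in *. simpl. rewrite IH, map_app.
  destruct t as [[]|]; reflexivity.
Qed.

Lemma index_of_nth x L i : index_of x L = Some i -> nth_error L i = Some x /\ i < length L.
Proof.
  revert i; induction L as [|y L IH]; simpl; intros i E; try discriminate.
  destruct (Nat.eqb_spec x y).
  - inversion E; subst; simpl; split; auto; lia.
  - destruct (index_of x L) eqn:E2; simpl in E; inversion E; subst.
    destruct (IH _ eq_refl); simpl; split; auto; lia.
Qed.

Lemma index_of_in x L : In x L -> exists i, index_of x L = Some i.
Proof.
  induction L as [|y L IH]; simpl; intros H; [contradiction|].
  destruct (Nat.eqb_spec x y); eauto.
  destruct H; [congruence|]. destruct (IH H) as [i Hi]; rewrite Hi; simpl; eauto.
Qed.

Lemma canon_inj L x y : canon L x = canon L y -> x = y.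
Proof.
  unfold canon.
  destruct (index_of x L) eqn:Ex, (index_of y L) eqn:Ey; intros E; subst.
  - apply index_of_nth in Ex; apply index_of_nth in Ey.
    destruct Ex, Ey; congruence.
  - apply index_of_nth in Ex; lia.
  - apply index_of_nth in Ey; lia.
  - lia.
Qed.

Lemma index_of_map r x L : (forall a b, r a = r b -> a = b) ->
  index_of (r x) (map r L) = index_of x L.
Proof.
  intros Hr; induction L as [|y L IH]; simpl; auto.
  rewrite IH. destruct (Nat.eqb_spec x y), (Nat.eqb_spec (r x) (r y)); subst; auto.
  - congruence.
  - apply Hr in e; congruence.
Qed.

Lemma canon_map r L x : (forall a b, r a = r b -> a = b) -> In x L ->
  canon (map r L) (r x) = canon L x.
Proof.
  intros Hr Hx. unfold canon. rewrite index_of_map by auto.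
  destruct (index_of_in _ _ Hx) as [i Hi]; rewrite Hi; auto.
Qed.

Lemma play_nil A : play A [].
Proof.
  unfold play, jseq. repeat split; intros;
  repeat match goal with H : nth_error [] ?i = _ |- _ => destruct i; discriminate end.
  unfold O_ovars; simpl; constructor.
Qed.

Lemma vcl_even A Sg s : vclosure A Sg s -> Nat.even (length s) = true.
Proof.
  induction 1; auto. rewrite length_app. simpl.
  replace (length s + 2) with (S (S (length s))) by lia. auto.
Qed.

Lemma vcl_play A Sg s : vclosure A Sg s -> play A s.
Proof. induction 1; auto using play_nil. Qed.

Lemma prefix_of {X} (s t s0 : list X) m n : s ++ t = s0 ++ [m; n] ->
  length s <= length s0 -> exists t', s0 = s ++ t'.
Proof.
  intros E L. exists (skipn (length s) s0).
  assert (firstn (length s) s0 = s).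
  { assert (H := f_equal (firstn (length s)) E).
    rewrite firstn_app, Nat.sub_diag, firstn_all in H. simpl in H. rewrite app_nil_r in H.
    rewrite firstn_app in H. replace (length s - length s0) with 0 in H by lia.
    simpl in H. rewrite app_nil_r in H. auto. }
  transitivity (firstn (length s) s0 ++ skipn (length s) s0);
  [symmetry; apply firstn_skipn| rewrite H; auto].
Qed.

Lemma vcl_prefix A Sg u : vclosure A Sg u -> forall s t, u = s ++ t ->
  Nat.even (length s) = true -> vclosure A Sg s.
Proof.
  induction 1; intros s0 t E Ev.
  - symmetry in E. apply app_eq_nil in E. destruct E; subst. constructor.
  - destruct t as [|x t].
    + rewrite app_nil_r in E. subst. constructor; auto.
    + assert (Es := vcl_even _ _ _ H).
      assert (Ll := f_equal (@length _) E). rewrite !length_app in Ll. simpl in Ll.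
      assert (length s0 <= length s).
      { destruct (Nat.le_gt_cases (length s0) (length s)); auto.
        assert (length s0 = S (length s)) by lia.
        rewrite H3, Nat.even_succ in Ev. rewrite <- Nat.negb_even, Es in Ev. discriminate. }
      destruct (prefix_of s0 (x::t) s m n (eq_sym E) H2) as [t' Ht'].
      eapply IHvclosure; eauto.
Qed.

Lemma just_lt A w i o j : jseq A w -> nth_error w i = Some o -> o_just o = Some j -> j < i.
Proof.
  intros [Hj _] Hn Ho. destruct (Hj _ _ Hn) as [_ [Hp _]].
  destruct (parent A (o_move o)).
  - destruct Hp as [j' [o' [E [L _]]]]. congruence.
  - congruence.
Qed.

Lemma polarity A w : play A w -> forall i o, nth_error w i = Some o ->
  is_O A (o_move o) = Nat.even i.
Proof.
  intros Hp. induction i; intros o Hn.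
  - destruct Hp as [[Hj _] _]. destruct (Hj _ _ Hn) as [_ [Hpar _]].
    unfold is_O, depth. simpl.
    destruct (parent A (o_move o)); auto.
    destruct Hpar as [j [o' [_ [L _]]]]. lia.
  - assert (i < length w).
    { assert (S i < length w) by (apply nth_error_Some; congruence). lia. }
    destruct (nth_error w i) eqn:E; [|apply nth_error_Some in H; contradiction].
    assert (Hi := IHi _ eq_refl).
    destruct Hp as [_ [Halt _]]. specialize (Halt _ _ _ E Hn).
    rewrite Nat.even_succ, <- Nat.negb_even, <- Hi.
    destruct (is_O A (o_move o0)), (is_O A (o_move o)); simpl; congruence.
Qed.

Definition just_ok (u : list occ) := forall i o j, nth_error u i = Some o -> o_just o = Some j -> j < i.

Lemma pv_prefix A u y : just_ok u -> forall f k, k <= length u ->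
  pv_idx A (u ++ y) f k = pv_idx A u f k.
Proof.
  intros H f. induction f; intros k Hk; simpl; auto.
  destruct k as [|k]; auto.
  rewrite nth_error_app1 by lia.
  destruct (nth_error u k) eqn:E; auto.
  destruct (negb (is_O A (o_move o))).
  - rewrite IHf by lia; auto.
  - destruct (o_just o) eqn:Ej; auto.
    specialize (H _ _ _ E Ej). rewrite IHf by lia. auto.
Qed.

Lemma pv_bound A u : just_ok u -> forall f k x, In x (pv_idx A u f k) -> x < k.
Proof.
  intros H f. induction f; intros k x Hx; simpl in Hx; [contradiction|].
  destruct k as [|k]; [contradiction|].
  destruct (nth_error u k) eqn:E; [|contradiction].
  destruct (negb (is_O A (o_move o))).
  - apply in_app_or in Hx; destruct Hx as [Hx|[Hx|[]]]; [apply IHf in Hx|]; lia.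
  - destruct (o_just o) eqn:Ej.
    + specialize (H _ _ _ E Ej).
      apply in_app_or in Hx; destruct Hx as [Hx|[Hx|[]]]; [apply IHf in Hx|]; lia.
    + destruct Hx as [Hx|[]]; lia.
Qed.

Lemma combine_app2 {X Y} (l1 l3 : list X) (l2 l4 : list Y) : length l1 = length l2 ->
  combine (l1 ++ l3) (l2 ++ l4) = combine l1 l2 ++ combine l3 l4.
Proof.
  revert l2; induction l1; intros [|b l2] E; simpl in *; try discriminate; auto.
  rewrite IHl1; auto.
Qed.

Definition PI A u := pv_idx A u (length u) (length u).
Definition Pidx A u := PI A u ++ [length u].
Definition Ppre A u := map (fun ip => adj_occ (Pidx A u) (fst ip) (nth (snd ip) u dummy_occ))
   (combine (seq 0 (length (PI A u))) (PI A u)).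

Lemma preview_last A u x : just_ok u -> is_O A (o_move x) = false ->
  preview A (u ++ [x]) = Ppre A u ++ [adj_occ (Pidx A u) (length (PI A u)) x].
Proof.
  intros H Hx. unfold preview. rewrite length_app. simpl length. rewrite Nat.add_1_r.
  cbn [pv_idx]. rewrite nth_error_app2, Nat.sub_diag by lia. simpl nth_error.
  cbv iota beta. rewrite Hx. simpl negb. cbv iota. rewrite pv_prefix by auto.
  fold (PI A u). fold (Pidx A u).
  unfold restrict, Ppre. unfold Pidx at 2. rewrite length_app. simpl length.
  replace (combine (seq 0 (length (PI A u) + 1)) (Pidx A u)) with
    (combine (seq 0 (length (PI A u))) (PI A u) ++ [(length (PI A u), length u)]).
  2:{ unfold Pidx. rewrite seq_app, combine_app2 by (rewrite length_seq; auto). reflexivity. }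
  rewrite map_app. f_equal.
  - apply map_ext_in. intros [i j] Hin. simpl. f_equal.
    apply in_combine_r in Hin. apply pv_bound in Hin; auto.
    rewrite app_nth1; auto.
  - simpl. rewrite app_nth2, Nat.sub_diag by lia. reflexivity.
Qed.

Lemma O_ovars_app A l1 l2 : O_ovars A (l1 ++ l2) = O_ovars A l1 ++ O_ovars A l2.
Proof. unfold O_ovars. apply flat_map_app. Qed.

Lemma view_last A u x : just_ok u -> is_O A (o_move x) = false ->
  view A (u ++ [x]) = ren_seq (canon (O_ovars A (Ppre A u))) (Ppre A u) ++
     [ren_occ (canon (O_ovars A (Ppre A u))) (adj_occ (Pidx A u) (length (PI A u)) x)].
Proof.
  intros H Hx. unfold view. rewrite preview_last by auto.
  rewrite O_ovars_app. unfold O_ovars at 2. simpl. rewrite Hx, !app_nil_r.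
  unfold ren_seq. rewrite map_app. reflexivity.
Qed.

Lemma length_Ppre A u : length (Ppre A u) = length (PI A u).
Proof. unfold Ppre. rewrite length_map, length_combine, length_seq. lia. Qed.

Lemma remap_inj idx i j1 j2 : remap idx i j1 = remap idx i j2 -> remap idx i j1 < i -> j1 = j2.
Proof.
  unfold remap. destruct (index_of j1 idx) eqn:E1; [|lia].
  destruct (index_of j2 idx) eqn:E2; intros E L; subst; [|lia].
  apply index_of_nth in E1; apply index_of_nth in E2. destruct E1, E2; congruence.
Qed.

Lemma mu_inj idx i la lb :
  map (option_map (fun p : nat * nat => (remap idx i (fst p), snd p))) la =
  map (option_map (fun p : nat * nat => (remap idx i (fst p), snd p))) lb ->
  (forall k j l, nth_error (map (option_map (fun p : nat * nat => (remap idx i (fst p), snd p))) la) k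
     = Some (Some (j, l)) -> j < i) -> la = lb.
Proof.
  revert lb; induction la as [|a la IH]; intros [|b lb] E Hk; simpl in E; try discriminate; auto.
  inversion E as [[Eh Et]]. f_equal.
  - destruct a as [[j l]|], b as [[j' l']|]; simpl in Eh; try discriminate; auto.
    inversion Eh. assert (remap idx i j < i) by (apply (Hk 0 _ l); reflexivity).
    f_equal. f_equal; auto. eapply remap_inj; eauto.
  - apply IH; auto. intros k j l Hn. apply (Hk (S k) j l). exact Hn.
Qed.

Lemma last_inj A V0 i idx c a b :
  (forall x y, c x = c y -> x = y) ->
  length V0 = i ->
  jseq A (V0 ++ [ren_occ c (adj_occ idx i a)]) ->
  ren_occ c (adj_occ idx i a) = ren_occ c (adj_occ idx i b) -> a = b.
Proof.
  intros Hc Hl [Hj _] E.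
  assert (Hn : nth_error (V0 ++ [ren_occ c (adj_occ idx i a)]) i = Some (ren_occ c (adj_occ idx i a))).
  { rewrite nth_error_app2 by lia. rewrite Hl, Nat.sub_diag. reflexivity. }
  destruct (Hj _ _ Hn) as [_ [Hpar [_ [Hmu _]]]].
  destruct a as [ma ja mua ia], b as [mb jb mub ib].
  unfold ren_occ, adj_occ in E, Hpar, Hmu; simpl in E, Hpar, Hmu.
  inversion E as [[Em Ej Emu Ei]]. subst mb.
  assert (ja = jb).
  { destruct ja as [ja|], jb as [jb|]; simpl in Ej; try discriminate; auto.
    inversion Ej. f_equal. destruct (parent A ma).
    - destruct Hpar as [j [o' [Hj1 [Hj2 _]]]]. inversion Hj1; subst.
      eapply remap_inj; eauto.
    - discriminate. }
  subst jb.
  assert (mua = mub).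
  { eapply mu_inj; eauto. intros k j l Hk. eapply Hmu; eauto. }
  subst mub.
  assert (ia = ib).
  { eapply map_inj; [|exact Ei]. apply ren_term_inj; auto. }
  subst; auto.
Qed.

Lemma jseq_just_ok A w : jseq A w -> just_ok w.
Proof. intros H i o j Hn Hj. eapply just_lt; eauto. Qed.

Lemma just_ok_prefix u y : just_ok (u ++ y) -> just_ok u.
Proof.
  intros H i o j Hn Hj. apply (H i o j); auto.
  rewrite nth_error_app1; auto. apply nth_error_Some; congruence.
Qed.

Lemma det_step A sigma u a b : view_function A sigma ->
  play A (u ++ [a]) -> play A (u ++ [b]) -> Nat.even (length u) = false ->
  sigma (view A (u ++ [a])) -> sigma (view A (u ++ [b])) -> a = b.
Proof.
  intros [_ [Hv [_ Hdet]]] Pa Pb Ev Sa Sb.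
  assert (Hu : just_ok u).
  { apply (just_ok_prefix u [a]). eapply jseq_just_ok. apply Pa. }
  assert (Ha : is_O A (o_move a) = false).
  { rewrite (polarity A _ Pa (length u) a); auto.
    rewrite nth_error_app2, Nat.sub_diag by lia; reflexivity. }
  assert (Hb : is_O A (o_move b) = false).
  { rewrite (polarity A _ Pb (length u) b); auto.
    rewrite nth_error_app2, Nat.sub_diag by lia; reflexivity. }
  rewrite view_last in Sa, Sb by auto.
  assert (E := Hdet _ _ _ Sa Sb).
  destruct (Hv _ Sa) as [[[Hj _] _] _].
  eapply last_inj; [| |exact Hj|exact E].
  - intros; eapply canon_inj; eauto.
  - unfold ren_seq. rewrite length_map. apply length_Ppre.
Qed.

Lemma nth_error_ren r w i : nth_error (ren_seq r w) i = option_map (ren_occ r) (nth_error w i).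
Proof. apply nth_error_map. Qed.

Lemma O_ovars_ren A r v : O_ovars A (ren_seq r v) = map r (O_ovars A v).
Proof.
  induction v as [|o v IH]; auto.
  unfold O_ovars in *; simpl. rewrite IH, map_app. f_equal.
  destruct (is_O A (o_move o)); auto. apply ovars_inst_ren.
Qed.

Definition rth (r : nat -> nat) (p : nat * term) := (fst p, ren_term r (snd p)).

Lemma combine_map_r (l : list nat) (l' : list term) r :
  combine l (map (ren_term r) l') = map (rth r) (combine l l').
Proof.
  revert l'; induction l; intros [|b l']; simpl; auto. rewrite IHl; auto.
Qed.

Lemma theta_ren A r w f i : theta_f A (ren_seq r w) f i = map (rth r) (theta_f A w f i).
Proof.
  revert i; induction f; intros i; simpl; auto.
  rewrite nth_error_ren. destruct (nth_error w i); simpl; auto.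
  rewrite map_app, combine_map_r. f_equal.
  destruct (o_just o); auto.
Qed.

Lemma lookup_ren r x th : lookup x (map (rth r) th) = option_map (ren_term r) (lookup x th).
Proof.
  induction th as [|[y u] th IH]; simpl; auto. destruct (Nat.eqb x y); auto.
Qed.

Lemma subst_ren r th t : AP_term t -> subst (map (rth r) th) t = ren_term r (subst th t).
Proof.
  induction t using term_ind2; intros Hap.
  - destruct v; simpl; auto.
    + rewrite lookup_ren. destruct (lookup x th); auto.
    + exfalso. apply (Hap (VO x)). simpl; auto.
  - simpl. f_equal. rewrite map_map. induction H; simpl; auto. f_equal.
    + apply H. intros v Hv. apply Hap. simpl. apply in_or_app; auto.
    + apply IHForall. intros v Hv. apply Hap. simpl. apply in_or_app; auto.
Qed.

Lemma play_ren A r w : wf_arena A -> O_renaming r -> play A w -> play A (ren_seq r w).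
Proof.
  intros [_ [_ Hwf]] Hr [[Hj Hnd] [Halt [HOm [HPm [Hmu Hov]]]]].
  assert (Inv : forall i o, nth_error (ren_seq r w) i = Some o ->
     exists o0, o = ren_occ r o0 /\ nth_error w i = Some o0).
  { intros i o Hn. rewrite nth_error_ren in Hn. destruct (nth_error w i); inversion Hn; eauto. }
  assert (Fw : forall i o0, nth_error w i = Some o0 -> nth_error (ren_seq r w) i = Some (ren_occ r o0)).
  { intros i o0 E. rewrite nth_error_ren, E. reflexivity. }
  refine (conj (conj _ _) (conj _ (conj _ (conj _ (conj _ _))))).
  - intros i o Hn. destruct (Inv _ _ Hn) as [o0 [-> E]].
    destruct (Hj _ _ E) as [H1 [H2 [H3 [H4 [H5 H6]]]]]. simpl.
    split; [auto|]. split.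
    { destruct (parent A (o_move o0)); auto.
      destruct H2 as [j [o' [Ej [Lj [Ej' Em]]]]]. exists j, (ren_occ r o'). auto. }
    split; [auto|]. split.
    { intros k j l Hk. destruct (H4 k j l Hk) as [Hjl [o' [E' [P L]]]].
      split; auto. exists (ren_occ r o'). auto. }
    split; [rewrite length_map; auto|].
    destruct (is_O A (o_move o0)); intros t Ht; apply in_map_iff in Ht; destruct Ht as [t0 [<- Ht0]].
    + destruct (H6 t0 Ht0) as [k ->]. exists (r k). reflexivity.
    + intros v Hv. rewrite fvars_ren in Hv. apply in_map_iff in Hv. destruct Hv as [v0 [<- Hv0]].
      specialize (H6 _ Ht0 v0 Hv0). destruct v0; simpl; auto.
  - rewrite O_ovars_ren. apply FinFun.Injective_map_NoDup; auto.
  - intros i o o' Hn Hn'. destruct (Inv _ _ Hn) as [o0 [-> E]]. destruct (Inv _ _ Hn') as [o1 [-> E']].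
    simpl. eapply Halt; eauto.
  - intros i o Hn HO x Hx. destruct (Inv _ _ Hn) as [o0 [-> E]]. eapply HOm; eauto.
  - intros i o Hn HO x Hx. destruct (Inv _ _ Hn) as [o0 [-> E]]. eapply HPm; eauto.
  - intros i o k j l o' a b Hn Hk Hn' Ha Hb.
    destruct (Inv _ _ Hn) as [o0 [-> E]]. destruct (Inv _ _ Hn') as [o1 [-> E']].
    simpl in *. destruct (Hmu _ _ _ _ _ _ _ _ E Hk E' Ha Hb) as [Hpr Heq]. split; [exact Hpr|].
    unfold theta. rewrite !theta_ren.
    assert (M0 : o_move o0 < n_moves A) by (apply (Hj _ _ E)).
    assert (M1 : o_move o1 < n_moves A) by (apply (Hj _ _ E')).
    rewrite (map_ext_in _ (fun t => ren_term r (subst (theta A w i) t)) (a_args a)).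
    2:{ intros t Ht. apply subst_ren. eapply Hwf; [exact M0| eapply nth_error_In; exact Ha |exact Ht]. }
    rewrite (map_ext_in _ (fun t => ren_term r (subst (theta A w j) t)) (a_args b)).
    2:{ intros t Ht. apply subst_ren. eapply Hwf; [exact M1| eapply nth_error_In; exact Hb |exact Ht]. }
    rewrite <- (map_map (subst (theta A w i)) (ren_term r)).
    rewrite <- (map_map (subst (theta A w j)) (ren_term r)).
    unfold theta in Heq. unfold theta. rewrite Heq. reflexivity.
  - intros i o t x Hn HP Ht Hx. destruct (Inv _ _ Hn) as [o0 [-> E]]. simpl in *.
    apply in_map_iff in Ht. destruct Ht as [t0 [<- Ht0]].
    rewrite fvars_ren in Hx. apply in_map_iff in Hx. destruct Hx as [v0 [Ev Hv0]].
    destruct v0; simpl in Ev; inversion Ev; subst.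
    destruct (Hov _ _ _ _ E HP Ht0 Hv0) as [j [o' [Lj [Ej [HO' Hin]]]]].
    exists j, (ren_occ r o'). repeat split; auto. simpl.
    rewrite ovars_inst_ren. apply in_map; auto.
Qed.

Lemma pv_ren A r w f k : pv_idx A (ren_seq r w) f k = pv_idx A w f k.
Proof.
  revert k; induction f; intros k; simpl; auto.
  destruct k; auto. rewrite nth_error_ren. destruct (nth_error w k); simpl; auto.
  rewrite !IHf. destruct (o_just o); rewrite ?IHf; reflexivity.
Qed.

Lemma restrict_ren r w idx : restrict (ren_seq r w) idx = ren_seq r (restrict w idx).
Proof.
  unfold restrict, ren_seq. rewrite map_map. apply map_ext. intros [i j]. simpl.
  transitivity (adj_occ idx i (nth j (map (ren_occ r) w) (ren_occ r dummy_occ))); [reflexivity|].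
  rewrite map_nth. reflexivity.
Qed.

Lemma preview_ren A r w : preview A (ren_seq r w) = ren_seq r (preview A w).
Proof.
  unfold preview. rewrite restrict_ren. rewrite pv_ren.
  assert (length (ren_seq r w) = length w) by apply length_map.
  rewrite H. reflexivity.
Qed.

Lemma in_O_ovars A v o k : In o v -> is_O A (o_move o) = true ->
  In k (ovars_inst (o_inst o)) -> In k (O_ovars A v).
Proof.
  intros Ho HO Hk. unfold O_ovars. apply in_flat_map. exists o. rewrite HO. auto.
Qed.

Lemma view_vars A v : play A (ren_seq (canon (O_ovars A v)) v) ->
  forall o t x, In o v -> In t (o_inst o) -> In (VO x) (fvars t) -> In x (O_ovars A v).
Proof.
  set (c := canon (O_ovars A v)). intros Hp o t x Ho Ht Hx.
  destruct (In_nth_error _ _ Ho) as [i Hi].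
  assert (Hn : nth_error (ren_seq c v) i = Some (ren_occ c o)) by (rewrite nth_error_ren, Hi; reflexivity).
  destruct (is_O A (o_move o)) eqn:HO.
  - destruct Hp as [[Hj _] _]. destruct (Hj _ _ Hn) as [_ [_ [_ [_ [_ H6]]]]].
    simpl in H6. rewrite HO in H6.
    destruct (H6 (ren_term c t)) as [k Ek]. { apply in_map; auto. }
    destruct t as [[]|]; simpl in Ek; inversion Ek; subst.
    simpl in Hx. destruct Hx as [Hx|[]]. inversion Hx; subst.
    eapply in_O_ovars; eauto. unfold ovars_inst. apply in_flat_map. exists (Var (VO x)). simpl; auto.
  - destruct Hp as [_ [_ [_ [_ [_ Hov]]]]].
    destruct (Hov i (ren_occ c o) (ren_term c t) (c x) Hn) as [j [o'' [Lj [Ej [HO' Hin]]]]].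
    + simpl; auto.
    + simpl. apply in_map; auto.
    + rewrite fvars_ren. apply in_map_iff. exists (VO x). auto.
    + rewrite nth_error_ren in Ej. destruct (nth_error v j) eqn:Ej'; inversion Ej; subst.
      simpl in *. rewrite ovars_inst_ren in Hin. apply in_map_iff in Hin. destruct Hin as [y [Ey Hy]].
      apply canon_inj in Ey. subst. apply (in_O_ovars A v o0 x); auto. eapply nth_error_In; eauto.
Qed.

Lemma view_ren A r w : O_renaming r -> play A (view A w) -> view A (ren_seq r w) = view A w.
Proof.
  intros Hr Hp. unfold view in *. rewrite preview_ren.
  set (v := preview A w) in *. rewrite O_ovars_ren.
  unfold ren_seq. rewrite map_map. apply map_ext_in. intros o Ho.
  unfold ren_occ; simpl. f_equal. rewrite map_map. apply map_ext_in. intros t Ht.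
  rewrite ren_term_comp. apply ren_term_ext. intros x Hx. apply canon_map; auto.
  eapply view_vars; eauto.
Qed.

Lemma vcl_inv A Sg s x : vclosure A Sg (s ++ [x]) ->
  exists s1 m1, s = s1 ++ [m1] /\ vclosure A Sg s1 /\ play A (s ++ [x]) /\ Sg (view A (s ++ [x])).
Proof.
  intros H. remember (s ++ [x]) as u. destruct H.
  - destruct s; discriminate.
  - assert (E : s ++ [x] = (s0 ++ [m]) ++ [n]) by (rewrite <- app_assoc; auto).
    apply app_inj_tail in E. destruct E as [E1 E2].
    exists s0, m. auto.
Qed.

Theorem mainTheorem7 (A : arena) (sigma : list occ -> Prop) :
  wf_arena A -> view_function A sigma -> strategy A (vclosure A sigma).
Proof.
  intros Hwf Hvf.
  refine (conj _ (conj _ (conj _ (conj _ _)))).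
  - exists []. constructor.
  - intros s H. split; [eapply vcl_play; eauto | eapply vcl_even; eauto].
  - intros s t H Ev. eapply vcl_prefix; eauto.
  - intros s m n Hm Hn.
    destruct (vcl_inv _ _ _ _ Hm) as [s1 [m1 [Es [V1 [Pm Sm]]]]].
    destruct (vcl_inv _ _ _ _ Hn) as [_ [_ [_ [_ [Pn Sn]]]]].
    eapply det_step; eauto.
    subst s. rewrite length_app. simpl. rewrite Nat.add_1_r, Nat.even_succ, <- Nat.negb_even.
    rewrite (vcl_even _ _ _ V1). reflexivity.
  - intros s r Hr H. induction H.
    + constructor.
    + assert (E : ren_seq r (s ++ [m; n]) = ren_seq r s ++ [ren_occ r m; ren_occ r n])
        by (unfold ren_seq; rewrite map_app; reflexivity).
      rewrite E. apply vcl_step; auto.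
      * rewrite <- E. apply play_ren; auto.
      * rewrite <- E. rewrite view_ren; auto.
        destruct Hvf as [_ [Hv _]]. apply (Hv _ H1).
Qed.
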